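(* Let $\alpha,\beta$ be fixed nonzero real numbers. There exist constants $C,N>0$, independent of $n$, $\epsilon$ and the point set, such that the following holds: for every $n>N$, every $\epsilon>0$, and every set $P\subset[0,1]^2$ of $n$ points satisfying the separation condition $$\min\{|p-q|:\ p,q\in P,\ p\neq q\}\ge \epsilon,$$ we have $$|\Pi_{\alpha,\beta}(P)|\le C\, n^{4/3}\,\epsilon^{-1}\log(\epsilon^{-1}).$$
   Context: For a finite set $P\subset\mathbb R^2$ and real numbers $\alpha,\beta$, define the set of ordered triples $$\Pi_{\alpha,\beta}(P)=\{(p,q,r)\in P\times P\times P:\ p\cdot q=\alpha \text{ and } p\cdot r=\beta\},$$ where $\cdot$ is the standard dot product on $\mathbb R^2$ (the points $p,q,r$ need not be distinct). Here $|p-q|$ is the Euclidean distance. *)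

(* Defs.v *)
From Stdlib Require Import Reals List.
Import ListNotations.
Open Scope R_scope.

Definition pt := (R * R)%type.

Definition dot (p q : pt) : R := fst p * fst q + snd p * snd q.

Definition dist2 (p q : pt) : R :=
  sqrt ((fst p - fst q) ^ 2 + (snd p - snd q) ^ 2).

Definition in_unit_square (p : pt) : Prop :=
  0 <= fst p <= 1 /\ 0 <= snd p <= 1.

Definition Rdec_eqb (x y : R) : bool :=
  if Req_EM_T x y then true else false.

(* The ordered triples (p,q,r) in P^3 with p.q = alpha and p.r = beta.
   P is a duplicate-free list representing the finite point set. *)
Definition Pi_list (alpha beta : R) (P : list pt) : list (pt * pt * pt) :=
  filter (fun t => match t with (p, q, r) =>
            andb (Rdec_eqb (dot p q) alpha) (Rdec_eqb (dot p r) beta) end)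
         (list_prod (list_prod P P) P).

Definition Pi_card (alpha beta : R) (P : list pt) : nat :=
  length (Pi_list alpha beta P).

(* Main.v *)
Require Import Defs.
From Stdlib Require Import Reals List Lia Lra Psatz ZArith.
Import ListNotations.
Open Scope R_scope.

Definition ind (b : bool) : nat := if b then 1%nat else 0%nat.

Fixpoint sum {A} (f : A -> nat) (l : list A) : nat :=
  match l with [] => 0%nat | x :: t => (f x + sum f t)%nat end.

Lemma sum_app {A} (f : A -> nat) l1 l2 : sum f (l1 ++ l2) = (sum f l1 + sum f l2)%nat.
Proof. induction l1; simpl; lia. Qed.

Lemma sum_ext_in {A} (f g : A -> nat) l :
  (forall x, In x l -> f x = g x) -> sum f l = sum g l.
Proof. induction l; simpl; intros H; auto. Qed.

Lemma sum_le_in {A} (f g : A -> nat) l :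
  (forall x, In x l -> (f x <= g x)%nat) -> (sum f l <= sum g l)%nat.
Proof. induction l; simpl; intros H; auto. specialize (IHl (fun x h => H x (or_intror h))).
  specialize (H a (or_introl eq_refl)). lia. Qed.

Lemma sum_add {A} (f g : A -> nat) l : sum (fun x => f x + g x)%nat l = (sum f l + sum g l)%nat.
Proof. induction l; simpl; lia. Qed.

Lemma sum_mul_l {A} c (f : A -> nat) l : sum (fun x => c * f x)%nat l = (c * sum f l)%nat.
Proof. induction l; simpl; auto. rewrite IHl; lia. Qed.

Lemma sum_mul_r {A} c (f : A -> nat) l : sum (fun x => f x * c)%nat l = (sum f l * c)%nat.
Proof. induction l; simpl; auto. rewrite IHl; lia. Qed.

Lemma sum_swap {A B} (f : A -> B -> nat) l1 l2 :
  sum (fun x => sum (fun y => f x y) l2) l1 = sum (fun y => sum (fun x => f x y) l1) l2.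
Proof. induction l1; simpl.
  - induction l2; simpl; auto.
  - rewrite IHl1. rewrite <- sum_add. reflexivity. Qed.

Lemma sum_filter {A} (b : A -> bool) f l :
  sum f (filter b l) = sum (fun x => ind (b x) * f x)%nat l.
Proof. induction l; simpl; auto. destruct (b a); simpl; lia. Qed.

Lemma length_sum {A} (l : list A) : length l = sum (fun _ => 1%nat) l.
Proof. induction l; simpl; auto. Qed.

Lemma length_filter_sum {A} (b : A -> bool) l : length (filter b l) = sum (fun x => ind (b x)) l.
Proof. rewrite length_sum, sum_filter. apply sum_ext_in. intros; lia. Qed.

Lemma sum_const_le {A} (f : A -> nat) c l :
  (forall x, In x l -> (f x <= c)%nat) -> (sum f l <= c * length l)%nat.
Proof. induction l; simpl; intros H. lia. specialize (IHl (fun x h => H x (or_intror h))).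
  specialize (H a (or_introl eq_refl)). lia. Qed.

Lemma sum_ind_le1 {A} (b : A -> bool) l : NoDup l ->
  (forall x y, In x l -> In y l -> b x = true -> b y = true -> x = y) ->
  (sum (fun x => ind (b x)) l <= 1)%nat.
Proof. induction 1 as [|a l Ha Hl IH]; simpl; intros H. lia.
  destruct (b a) eqn:E; simpl.
  - assert (sum (fun x => ind (b x)) l = 0%nat).
    { clear IH. assert (forall y, In y l -> b y = false).
      { intros y Hy. destruct (b y) eqn:Ey; auto. exfalso. apply Ha.
        rewrite (H a y); simpl; auto. }
      clear H Hl Ha. induction l; simpl; auto. rewrite H0; simpl; auto. apply IHl.
      intros; apply H0; simpl; auto. }
    lia.
  - apply IH. intros; apply H; simpl; auto.
Qed.

Lemma sum_prod {A B} (g : A * B -> nat) l1 l2 :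
  sum g (list_prod l1 l2) = sum (fun x => sum (fun y => g (x, y)) l2) l1.
Proof. induction l1; simpl; auto. rewrite sum_app, IHl1. f_equal.
  clear. induction l2; simpl; auto. Qed.

Local Close Scope R_scope.

Definition psum {A} (e : A -> A -> nat) (l : list A) := sum (fun x => sum (fun y => e x y) l) l.

Lemma psum_split {A} (e : A -> A -> nat) (b : A -> bool) l :
  (forall x y, In x l -> In y l -> b x = true -> b y = false -> e x y = 0%nat /\ e y x = 0%nat) ->
  psum e l = (psum e (filter b l) + psum e (filter (fun x => negb (b x)) l))%nat.
Proof.
  intros H. unfold psum. rewrite !sum_filter.
  rewrite <- sum_add. apply sum_ext_in. intros x Hx.
  rewrite !sum_filter.
  destruct (b x) eqn:Ex; simpl.
  - rewrite Nat.add_0_r. rewrite Nat.add_0_r. apply sum_ext_in. intros y Hy.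
    destruct (b y) eqn:Ey; simpl. lia. destruct (H x y Hx Hy Ex Ey). lia.
  - rewrite Nat.add_0_r. apply sum_ext_in. intros y Hy. destruct (b y) eqn:Ey; simpl.
    destruct (H y x Hy Hx Ey Ex). lia. lia.
Qed.

Lemma CS_bins {A} (f : A -> Z) (B : nat) : forall (lo : Z) (l : list A),
  (forall x, In x l -> (lo <= f x < lo + Z.of_nat B)%Z) ->
  (length l * length l <= B * psum (fun x y => ind (Z.eqb (f x) (f y))) l)%nat.
Proof.
  induction B as [|B IH]; intros lo l H.
  - destruct l as [|a l]; simpl; [lia|]. specialize (H a (or_introl eq_refl)). lia.
  - set (b := fun x => Z.eqb (f x) lo).
    rewrite (psum_split _ b).
    2:{ intros x y _ _ Hx Hy. unfold b in *. apply Z.eqb_eq in Hx. apply Z.eqb_neq in Hy.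
        split; unfold ind; destruct (Z.eqb _ _) eqn:E; auto; apply Z.eqb_eq in E; lia. }
    assert (Hl : length l = (length (filter b l) + length (filter (fun x => negb (b x)) l))%nat).
    { rewrite !length_filter_sum, <- sum_add, length_sum. apply sum_ext_in. intros.
      destruct (b x); simpl; lia. }
    assert (H1 : psum (fun x y => ind (Z.eqb (f x) (f y))) (filter b l) = (length (filter b l) * length (filter b l))%nat).
    { unfold psum. transitivity (sum (fun x => sum (fun _ => 1%nat) (filter b l)) (filter b l)).
      2:{ rewrite <- length_sum. assert (forall c (m : list A), sum (fun _ => c) m = (length m * c)%nat).
          { induction m; simpl; lia. } apply H0. }
      apply sum_ext_in. intros x Hx. apply sum_ext_in. intros y Hy.
      apply filter_In in Hx, Hy. unfold b in *. destruct Hx as [_ Hx], Hy as [_ Hy].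
      apply Z.eqb_eq in Hx, Hy. rewrite Hx, Hy, Z.eqb_refl. reflexivity. }
    assert (H2 := IH (lo + 1)%Z (filter (fun x => negb (b x)) l)).
    assert (H2' : forall x, In x (filter (fun x => negb (b x)) l) -> (lo + 1 <= f x < lo + 1 + Z.of_nat B)%Z).
    { intros x Hx. apply filter_In in Hx. destruct Hx as [Hx Hb]. specialize (H x Hx).
      unfold b in Hb. destruct (Z.eqb (f x) lo) eqn:E; try discriminate. apply Z.eqb_neq in E. lia. }
    specialize (H2 H2'). rewrite H1, Hl.
    set (a := length (filter b l)) in *. set (s := length (filter (fun x => negb (b x)) l)) in *.
    set (Q := psum _ (filter (fun x => negb (b x)) l)) in *.
    clearbody a s Q. clear - H2.
    pose proof (Z.square_nonneg (Z.of_nat B * Z.of_nat a - Z.of_nat s)%Z).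
    destruct B as [|B]. simpl in H2. assert (s = 0%nat) by nia. subst. nia.
    assert (Hk : (S B * (2 * a * s) <= S B * (S B * (a * a) + Q))%nat) by nia.
    apply Nat.mul_le_mono_pos_l in Hk; [|lia]. nia.
Qed.

Local Open Scope R_scope.

Definition fl (x : R) : Z := (up x - 1)%Z.

Lemma fl_spec x : IZR (fl x) <= x < IZR (fl x) + 1.
Proof. unfold fl. destruct (archimed x). rewrite minus_IZR. simpl. lra. Qed.

Lemma fl_same x y : fl x = fl y -> x - y < 1 /\ y - x < 1.
Proof. intros H. destruct (fl_spec x), (fl_spec y). rewrite H in *. lra. Qed.

Lemma fl_range x (K : nat) : 0 <= x -> x < INR K -> (0 <= fl x < Z.of_nat K)%Z.
Proof. intros. destruct (fl_spec x). split.
  - assert (IZR (-1) < IZR (fl x)) by (simpl; lra).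
    apply lt_IZR in H3. lia.
  - apply lt_IZR. rewrite <- INR_IZR_INZ. lra.
Qed.

Lemma dist2_small (x y : pt) e : 0 < e ->
  fst x - fst y < e / 2 -> fst y - fst x < e / 2 ->
  snd x - snd y < e / 2 -> snd y - snd x < e / 2 -> dist2 x y < e.
Proof. destruct x as [a b], y as [c d]; simpl. intros. unfold dist2; simpl. rewrite <- (sqrt_pow2 e) by lra.
  pose proof (pow2_ge_0 (a-c)). pose proof (pow2_ge_0 (b-d)).
  apply sqrt_lt_1; try lra. pose proof (pow2_ge_0 e); lra.
  pose proof (Rmult_lt_0_compat (e/2-(a-c)) (e/2+(a-c)) ltac:(lra) ltac:(lra)).
  pose proof (Rmult_lt_0_compat (e/2-(b-d)) (e/2+(b-d)) ltac:(lra) ltac:(lra)).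
  nra. Qed.

Lemma pt_eq_dec (x y : pt) : {x = y} + {x <> y}.
Proof. destruct x as [a b], y as [c d]. destruct (Req_EM_T a c), (Req_EM_T b d); subst; auto;
  right; intro H; inversion H; auto. Qed.

Lemma in_range (K : nat) z : In z (map Z.of_nat (seq 0 K)) <-> (0 <= z < Z.of_nat K)%Z.
Proof. rewrite in_map_iff. split.
  - intros [m [<- Hm]]. apply in_seq in Hm. lia.
  - intros H. exists (Z.to_nat z). split. lia. apply in_seq. lia. Qed.

Lemma packing eps (L : list pt) a b w (K : nat) : 0 < eps -> NoDup L ->
  (forall p q, In p L -> In q L -> p <> q -> eps <= dist2 p q) ->
  (forall p, In p L -> a <= fst p < a + w /\ b <= snd p < b + w) ->
  2 * w / eps <= INR K -> (length L <= K * K)%nat.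
Proof.
  intros He HN Hs Hb HK.
  set (g := fun p : pt => (fl (2 * (fst p - a) / eps), fl (2 * (snd p - b) / eps))).
  set (R0 := map Z.of_nat (seq 0 K)).
  assert (Hinj : NoDup (map g L)).
  { apply NoDup_map_NoDup_ForallPairs; auto. intros x y Hx Hy Hg.
    destruct (pt_eq_dec x y) as [|Hne]; auto. exfalso.
    unfold g in Hg. inversion Hg as [[H1 H2]].
    apply fl_same in H1. apply fl_same in H2.
    assert (dist2 x y < eps).
    { destruct H1 as [H1 H1'], H2 as [H2 H2'].
      apply dist2_small; auto.
      all: unfold Rdiv in *.
      all: apply (Rmult_lt_compat_r (eps / 2)) in H1; [|lra].
      all: apply (Rmult_lt_compat_r (eps / 2)) in H1'; [|lra].
      all: apply (Rmult_lt_compat_r (eps / 2)) in H2; [|lra].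
      all: apply (Rmult_lt_compat_r (eps / 2)) in H2'; [|lra].
      all: field_simplify in H1; field_simplify in H1'; field_simplify in H2; field_simplify in H2'; lra. }
    specialize (Hs x y Hx Hy Hne). lra. }
  assert (Hincl : incl (map g L) (list_prod R0 R0)).
  { intros z Hz. apply in_map_iff in Hz. destruct Hz as [p [<- Hp]].
    destruct (Hb p Hp) as [[Ha1 Ha2] [Hb1 Hb2]].
    unfold g. apply in_prod_iff. unfold R0. rewrite !in_range. split; apply fl_range.
    - apply Rmult_le_pos; [lra| apply Rlt_le, Rinv_0_lt_compat; lra].
    - apply Rlt_le_trans with (2 * w / eps); auto. unfold Rdiv.
      apply Rmult_lt_compat_r. apply Rinv_0_lt_compat; lra. lra.
    - apply Rmult_le_pos; [lra| apply Rlt_le, Rinv_0_lt_compat; lra].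
    - apply Rlt_le_trans with (2 * w / eps); auto. unfold Rdiv.
      apply Rmult_lt_compat_r. apply Rinv_0_lt_compat; lra. lra. }
  pose proof (NoDup_incl_length Hinj Hincl).
  rewrite length_map, length_prod in H. unfold R0 in H. rewrite length_map, length_seq in H. exact H.
Qed.

Definition on (g : R) (p q : pt) : bool := Rdec_eqb (dot p q) g.
Definition dd (g : R) (P : list pt) (p : pt) : nat := sum (fun q => ind (on g p q)) P.
Definition TT (g : R) (P : list pt) : nat := sum (fun p => dd g P p * dd g P p)%nat P.
Definition II (g : R) (P : list pt) : nat := sum (fun p => dd g P p) P.
Definition tri (g : R) (P : list pt) (Rel : pt -> pt -> bool) : nat :=
  sum (fun p => sum (fun q => sum (fun r => ind (on g p q) * ind (on g p r) * ind (Rel q r)) P) P)%nat P.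
Definition pteqb (q r : pt) : bool := if pt_eq_dec q r then true else false.

Lemma Rdec_eqb_true x y : Rdec_eqb x y = true <-> x = y.
Proof. unfold Rdec_eqb. destruct (Req_EM_T x y); split; congruence. Qed.

Lemma on_true g p q : on g p q = true <-> dot p q = g.
Proof. apply Rdec_eqb_true. Qed.

Lemma on_sym g p q : on g p q = on g q p.
Proof. unfold on, dot. rewrite (Rmult_comm (fst p)), (Rmult_comm (snd p)). reflexivity. Qed.

Lemma ind_andb a b : ind (a && b) = (ind a * ind b)%nat.
Proof. destruct a, b; reflexivity. Qed.

Lemma length_filter_ind {A} (b : A -> bool) l : length (filter b l) = sum (fun x => ind (b x)) l.
Proof. apply length_filter_sum. Qed.

Lemma Pi_card_eq a b P : Pi_card a b P = sum (fun p => dd a P p * dd b P p)%nat P.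
Proof.
  unfold Pi_card, Pi_list. rewrite length_filter_sum, sum_prod, sum_prod.
  apply sum_ext_in. intros p _. unfold dd. rewrite <- sum_mul_r.
  apply sum_ext_in. intros q _. rewrite <- sum_mul_l. apply sum_ext_in. intros r _.
  rewrite ind_andb. reflexivity.
Qed.

Lemma uniq_p g p p' q r : g <> 0 -> q <> r -> dot p q = g -> dot p r = g ->
  dot p' q = g -> dot p' r = g -> p = p'.
Proof.
  destruct p as [p1 p2], p' as [u1 u2], q as [q1 q2], r as [r1 r2]; unfold dot; simpl.
  intros Hg Hqr H1 H2 H3 H4.
  destruct (Req_EM_T (q1 * r2 - q2 * r1) 0) as [Hd|Hd].
  - exfalso. apply Hqr.
    assert (E1 : r1*(p1*q1+p2*q2) - q1*(p1*r1+p2*r2) = -p2*(q1*r2-q2*r1)) by ring.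
    assert (E2 : r2*(p1*q1+p2*q2) - q2*(p1*r1+p2*r2) = p1*(q1*r2-q2*r1)) by ring.
    rewrite Hd, H1, H2 in E1. rewrite Hd, H1, H2 in E2.
    assert (r1 * g = q1 * g) by lra.
    assert (r2 * g = q2 * g) by lra.
    apply Rmult_eq_reg_r in H; auto. apply Rmult_eq_reg_r in H0; auto. subst; auto.
  - assert (A1 : (p1-u1)*q1 + (p2-u2)*q2 = 0) by lra.
    assert (A2 : (p1-u1)*r1 + (p2-u2)*r2 = 0) by lra.
    assert ((p1 - u1) * (q1 * r2 - q2 * r1) = r2*((p1-u1)*q1 + (p2-u2)*q2) - q2*((p1-u1)*r1 + (p2-u2)*r2)) by ring.
    assert ((p2 - u2) * (q1 * r2 - q2 * r1) = q1*((p1-u1)*r1 + (p2-u2)*r2) - r1*((p1-u1)*q1 + (p2-u2)*q2)) by ring.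
    rewrite A1, A2 in H, H0. rewrite Rmult_0_r, Rmult_0_r, Rminus_0_r in H, H0.
    apply Rmult_integral in H. apply Rmult_integral in H0.
    destruct H; [|contradiction]. destruct H0; [|contradiction].
    f_equal; lra.
Qed.

Lemma sum_pteqb_le1 (P : list pt) q : NoDup P -> (sum (fun r => ind (pteqb q r)) P <= 1)%nat.
Proof. intros HN. apply sum_ind_le1; auto. intros x y _ _. unfold pteqb.
  destruct (pt_eq_dec q x), (pt_eq_dec q y); congruence. Qed.

Lemma tri_bound g P Rel : g <> 0 -> NoDup P ->
  (tri g P Rel <= II g P + sum (fun q => sum (fun r => if pt_eq_dec q r then 0 else ind (Rel q r)) P) P)%nat.
Proof.
  intros Hg HN. unfold tri.
  rewrite sum_swap.
  transitivity (sum (fun q => sum (fun r => sum (fun p => ind (on g p q) * ind (on g p r) * ind (Rel q r)) P) P)%nat P).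
  { apply Nat.eq_le_incl. apply sum_ext_in. intros q _. apply sum_swap. }
  unfold II, dd. rewrite (sum_swap (fun p q => ind (on g p q))).
  rewrite <- sum_add. apply sum_le_in. intros q Hq.
  transitivity (sum (fun r => ind (pteqb q r) * sum (fun p => ind (on g p q)) P +
                   (if pt_eq_dec q r then 0 else ind (Rel q r)))%nat P).
  - apply sum_le_in. intros r Hr. unfold pteqb. destruct (pt_eq_dec q r) as [<-|Hne].
    + simpl. rewrite Nat.add_0_r, Nat.add_0_r. apply sum_le_in. intros p _.
      destruct (on g p q), (Rel q q); simpl; lia.
    + simpl. destruct (Rel q r) eqn:ER; simpl.
      * transitivity (sum (fun p => ind (on g p q && on g p r)) P).
        { apply sum_le_in. intros p _. destruct (on g p q), (on g p r); simpl; lia. }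
        apply sum_ind_le1; auto. intros x y _ _ Hx Hy.
        apply Bool.andb_true_iff in Hx, Hy. destruct Hx as [Hx1 Hx2], Hy as [Hy1 Hy2].
        rewrite on_true in *. eapply uniq_p; eauto.
      * apply Nat.eq_le_incl. transitivity (sum (fun _ : pt => 0%nat) P).
        apply sum_ext_in; intros; lia. clear. induction P; simpl; auto.
  - rewrite sum_add, sum_mul_r. pose proof (sum_pteqb_le1 P q HN). nia.
Qed.

Definition Rltb (a b : R) : bool := if Rlt_dec a b then true else false.
Definition close (h : R) (q r : pt) : bool :=
  Rltb (Rabs (fst q - fst r)) h && Rltb (Rabs (snd q - snd r)) h.

Definition trip (g : R) (P : list pt) (Rel : pt -> pt -> bool) (p : pt) : nat :=
  sum (fun q => sum (fun r => ind (on g p q) * ind (on g p r) * ind (Rel q r)) P)%nat P.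

Lemma cs_p g P p (f : pt -> Z) (M : nat) Rel :
  (forall q, In q P -> on g p q = true -> (0 <= f q < Z.of_nat (S M))%Z) ->
  (forall q r, In q P -> In r P -> on g p q = true -> on g p r = true -> f q = f r -> Rel q r = true) ->
  (dd g P p * dd g P p <= S M * trip g P Rel p)%nat.
Proof.
  intros Hr Hc. unfold dd. rewrite <- length_filter_ind.
  eapply Nat.le_trans. apply (CS_bins f (S M) 0%Z).
  { intros x Hx. apply filter_In in Hx. destruct Hx. simpl. apply Hr; auto. }
  apply Nat.mul_le_mono_l. unfold psum, trip. rewrite sum_filter. apply sum_le_in. intros q Hq.
  rewrite sum_filter. rewrite <- sum_mul_l. apply sum_le_in. intros r Hr'.
  destruct (on g p q) eqn:E1, (on g p r) eqn:E2; simpl; try lia.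
  destruct (Z.eqb (f q) (f r)) eqn:E3; simpl; try lia.
  apply Z.eqb_eq in E3. rewrite (Hc q r Hq Hr' E1 E2 E3). simpl. lia.
Qed.

Lemma slope g p q r : g <> 0 -> dot p q = g -> dot p r = g ->
  Rabs (fst p) <= Rabs (snd p) -> Rabs (snd q - snd r) <= Rabs (fst q - fst r).
Proof.
  destruct p as [p1 p2], q as [q1 q2], r as [r1 r2]; unfold dot; simpl. intros Hg H1 H2 Hp.
  assert (Hp2 : p2 <> 0).
  { intro E. subst p2. rewrite Rabs_R0 in Hp. pose proof (Rabs_pos p1).
    assert (p1 = 0). { destruct (Req_EM_T p1 0); auto. exfalso. pose proof (Rabs_pos_lt p1 n). lra. }
    subst p1. apply Hg. rewrite <- H1. ring. }
  assert (E : p2 * (q2 - r2) = - (p1 * (q1 - r1))) by lra.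
  assert (E' : Rabs p2 * Rabs (q2 - r2) = Rabs p1 * Rabs (q1 - r1)).
  { rewrite <- !Rabs_mult, E, Rabs_Ropp. reflexivity. }
  pose proof (Rabs_pos_lt p2 Hp2). pose proof (Rabs_pos (q1 - r1)).
  apply Rmult_le_reg_l with (Rabs p2); auto. rewrite E'. apply Rmult_le_compat_r; auto.
Qed.

Lemma slope' g p q r : g <> 0 -> dot p q = g -> dot p r = g ->
  Rabs (snd p) <= Rabs (fst p) -> Rabs (fst q - fst r) <= Rabs (snd q - snd r).
Proof.
  intros. pose (sw := fun x : pt => (snd x, fst x)).
  apply (slope g (sw p) (sw q) (sw r)); auto; unfold sw, dot in *; simpl in *; lra.
Qed.

Lemma bin_close (M : nat) x y : (1 <= INR M) -> fl (x * INR M) = fl (y * INR M) -> Rabs (x - y) < / INR M.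
Proof. intros HM H. apply fl_same in H. destruct H.
  assert (0 < / INR M) by (apply Rinv_0_lt_compat; lra).
  apply Rabs_def1.
  - apply Rmult_lt_reg_r with (INR M). lra. rewrite Rinv_l by lra. lra.
  - apply Rmult_lt_reg_r with (INR M). lra. rewrite Ropp_mult_distr_l_reverse, Rinv_l by lra. lra.
Qed.

Lemma bin_range (M : nat) x : 0 <= x <= 1 -> (0 <= fl (x * INR M) < Z.of_nat (S M))%Z.
Proof. intros H. apply fl_range. pose proof (pos_INR M). nra.
  rewrite S_INR. pose proof (pos_INR M). nra. Qed.

Lemma cs_close g P (M : nat) p : g <> 0 -> (1 <= INR M) ->
  (forall q, In q P -> in_unit_square q) ->
  (dd g P p * dd g P p <= S M * trip g P (close (/ INR M)) p)%nat.
Proof.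
  intros Hg HM Hsq.
  destruct (Rle_dec (Rabs (fst p)) (Rabs (snd p))) as [Hs|Hs].
  - apply cs_p with (f := fun q => fl (fst q * INR M)).
    + intros q Hq _. apply bin_range. apply Hsq; auto.
    + intros q r Hq Hr Eq Er Ef. rewrite on_true in Eq, Er.
      pose proof (bin_close M _ _ HM Ef). pose proof (slope g p q r Hg Eq Er Hs).
      unfold close, Rltb. destruct (Rlt_dec _ _); [|lra]. destruct (Rlt_dec _ _); [|lra]. reflexivity.
  - apply cs_p with (f := fun q => fl (snd q * INR M)).
    + intros q Hq _. apply bin_range. apply Hsq; auto.
    + intros q r Hq Hr Eq Er Ef. rewrite on_true in Eq, Er.
      pose proof (bin_close M _ _ HM Ef). pose proof (slope' g p q r Hg Eq Er ltac:(lra)).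
      unfold close, Rltb. destruct (Rlt_dec _ _); [|lra]. destruct (Rlt_dec _ _); [|lra]. reflexivity.
Qed.

Lemma TT_close g P (M : nat) : g <> 0 -> (1 <= INR M) ->
  (forall q, In q P -> in_unit_square q) ->
  (TT g P <= S M * tri g P (close (/ INR M)))%nat.
Proof. intros. unfold TT, tri. rewrite <- sum_mul_l. apply sum_le_in. intros p _.
  apply cs_close; auto. Qed.

Lemma TT_true g P : TT g P = tri g P (fun _ _ => true).
Proof. unfold TT, tri, dd. apply sum_ext_in. intros p _. rewrite <- sum_mul_r.
  apply sum_ext_in. intros q _. rewrite <- sum_mul_l. apply sum_ext_in. intros r _. simpl. lia. Qed.

Lemma close_eq eps (P : list pt) (M : nat) q r : 0 < eps ->
  (forall p q, In p P -> In q P -> p <> q -> eps <= dist2 p q) ->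
  2 / eps <= INR M -> In q P -> In r P -> close (/ INR M) q r = true -> q = r.
Proof.
  intros He Hs HM Hq Hr Hc. unfold close, Rltb in Hc.
  destruct (Rlt_dec _ _) as [H1|]; [|discriminate]. destruct (Rlt_dec _ _) as [H2|]; [|discriminate].
  assert (Hinv : / INR M <= eps / 2).
  { assert (0 < 2 / eps) by (apply Rdiv_lt_0_compat; lra).
    replace (eps / 2) with (/ (2 / eps)) by (field; lra). apply Rinv_le_contravar; auto. }
  apply Rabs_def2 in H1, H2.
  destruct (pt_eq_dec q r) as [|Hne]; auto. exfalso.
  assert (dist2 q r < eps) by (apply dist2_small; lra).
  specialize (Hs q r Hq Hr Hne). lra.
Qed.

Lemma dd_bound g eps P (M : nat) p : g <> 0 -> 0 < eps -> NoDup P ->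
  (forall p q, In p P -> In q P -> p <> q -> eps <= dist2 p q) ->
  (forall q, In q P -> in_unit_square q) ->
  1 <= INR M -> 2 / eps <= INR M -> (dd g P p <= S M)%nat.
Proof.
  intros Hg He HN Hs Hsq HM HM2.
  pose proof (cs_close g P M p Hg HM Hsq).
  assert (trip g P (close (/ INR M)) p <= dd g P p)%nat.
  { unfold trip, dd. apply sum_le_in. intros q Hq.
    transitivity (ind (on g p q) * sum (fun r => ind (pteqb q r)) P)%nat.
    - rewrite <- sum_mul_l. apply sum_le_in. intros r Hr.
      destruct (close (/ INR M) q r) eqn:Ec.
      + pose proof (close_eq eps P M q r He Hs HM2 Hq Hr Ec). subst.
        unfold pteqb. destruct (pt_eq_dec r r); [|congruence]. destruct (on g p r); simpl; lia.
      + simpl. lia.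
    - pose proof (sum_pteqb_le1 P q HN). nia. }
  nia.
Qed.

Lemma nb_bound eps (P : list pt) h (K : nat) q : 0 < eps -> NoDup P ->
  (forall p q, In p P -> In q P -> p <> q -> eps <= dist2 p q) ->
  4 * h / eps <= INR K -> (sum (fun r => ind (close h q r)) P <= K * K)%nat.
Proof.
  intros He HN Hs HK. rewrite <- length_filter_ind.
  apply packing with eps (fst q - h) (snd q - h) (2 * h); auto.
  - apply NoDup_filter; auto.
  - intros x y Hx Hy. apply filter_In in Hx, Hy. apply Hs; tauto.
  - intros x Hx. apply filter_In in Hx. destruct Hx as [_ Hc].
    unfold close, Rltb in Hc.
    destruct (Rlt_dec _ _) as [H1|]; [|discriminate]. destruct (Rlt_dec _ _) as [H2|]; [|discriminate].
    apply Rabs_def2 in H1, H2. lra.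
  - replace (2 * (2 * h) / eps) with (4 * h / eps) by (field; lra). auto.
Qed.

Lemma nat_above x : 0 <= x -> exists m : nat, x <= INR m <= x + 1.
Proof. intros Hx. destruct (archimed x) as [H1 H2].
  assert (Hu : (0 <= up x)%Z). { assert (IZR (-1) < IZR (up x)) by (simpl; lra). apply lt_IZR in H. lia. }
  exists (Z.to_nat (up x)). rewrite INR_IZR_INZ, Z2Nat.id by auto. lra. Qed.

Lemma TT_bounds g eps P n (M M' K : nat) : g <> 0 -> 0 < eps -> NoDup P -> length P = n ->
  (forall p q, In p P -> In q P -> p <> q -> eps <= dist2 p q) ->
  (forall q, In q P -> in_unit_square q) ->
  1 <= INR M -> 1 <= INR M' -> 2 / eps <= INR M' -> 4 * / INR M / eps <= INR K ->
  (TT g P <= S M * (S M' * n + n * (K * K)))%nat /\ (TT g P <= S M' * n + n * n)%nat.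
Proof.
  intros Hg He HN Hl Hs Hsq HM HM' HM2 HK.
  assert (HI : (II g P <= S M' * n)%nat).
  { unfold II. rewrite <- Hl. apply sum_const_le. intros p _. eapply dd_bound; eauto. }
  split.
  - eapply Nat.le_trans. apply (TT_close g P M); auto. apply Nat.mul_le_mono_l.
    eapply Nat.le_trans. apply tri_bound; auto. apply Nat.add_le_mono; auto.
    rewrite <- Hl, Nat.mul_comm. apply sum_const_le. intros q _.
    eapply Nat.le_trans. 2: apply (nb_bound eps P _ K q He HN Hs HK).
    apply sum_le_in. intros r _. destruct (pt_eq_dec q r); lia.
  - rewrite TT_true. eapply Nat.le_trans. apply tri_bound; auto. apply Nat.add_le_mono; auto.
    rewrite <- Hl. apply sum_const_le. intros q _.
    rewrite length_sum. apply sum_le_in. intros r _. destruct (pt_eq_dec q r); simpl; lia.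
Qed.

Lemma Pi_le_TT a b P : (Pi_card a b P <= TT a P + TT b P)%nat.
Proof. rewrite Pi_card_eq. unfold TT. rewrite <- sum_add. apply sum_le_in. intros. nia. Qed.

Theorem theorem2 (alpha beta : R) (Halpha : alpha <> 0) (Hbeta : beta <> 0) :
  exists C N : R, 0 < C /\ 0 < N /\
    forall (n : nat) (eps : R) (P : list pt),
      N < INR n ->
      0 < eps ->
      NoDup P ->
      length P = n ->
      (forall p, In p P -> in_unit_square p) ->
      (forall p q, In p P -> In q P -> p <> q -> eps <= dist2 p q) ->
      INR (Pi_card alpha beta P)
        <= C * Rpower (INR n) (4 / 3) * / eps * ln (/ eps).
Proof.
  exists 96, 400. split; [lra|]. split; [lra|].
  intros n eps P HnN He HND Hlen Hsq Hsep.
  set (k := / eps).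
  assert (Hk0 : 0 < k) by (apply Rinv_0_lt_compat; auto).
  set (N := INR n) in *.
  destruct (nat_above (4 * k)) as [K0 [HK0a HK0b]]; [lra|].
  assert (Hn0 : (n <= K0 * K0)%nat).
  { rewrite <- Hlen. apply (packing eps P 0 0 2 K0); auto.
    all: try (intros p Hp; destruct (Hsq p Hp) as [[? ?] [? ?]]; lra).
    all: try (replace (2*2/eps) with (4*k) by (unfold k; field; lra); auto). }
  apply le_INR in Hn0. rewrite mult_INR in Hn0. fold N in Hn0.
  assert (Hk : 4 < k).
  { destruct (Rlt_le_dec 4 k) as [|Hk]; auto. exfalso.
    assert (INR K0 <= 17) by lra. pose proof (pos_INR K0).
    assert (INR K0 * INR K0 <= 17 * 17) by (apply Rmult_le_compat; lra). lra. }
  set (s := sqrt k).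
  assert (Hss : s * s = k) by (apply sqrt_sqrt; lra).
  assert (Hs0 : 0 <= s) by apply sqrt_pos.
  assert (Hs2 : 2 <= s) by nra.
  destruct (nat_above (2 * k)) as [M' [HM'a HM'b]]; [lra|].
  destruct (nat_above s) as [M [HMa HMb]]; [lra|].
  destruct (nat_above (4 * s)) as [K [HKa HKb]]; [lra|].
  assert (HKc : 4 * / INR M / eps <= INR K).
  { assert (/ INR M <= / s) by (apply Rinv_le_contravar; lra).
    assert (/ s * s = 1) by (field; lra).
    replace (4 * / INR M / eps) with (4 * / INR M * k) by (unfold k; field; lra).
    assert (0 < / s) by (apply Rinv_0_lt_compat; lra).
    assert (4 * / INR M * k <= 4 * / s * k) by (apply Rmult_le_compat_r; lra).
    assert (4 * / s * k = 4 * s) by (rewrite <- Hss; field; lra). lra. }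
  assert (HN0 : 0 < N) by lra.
  set (a := Rpower N (1/3)).
  assert (Ha0 : 0 < a) by (unfold a, Rpower; apply exp_pos).
  assert (Ha3 : a * a * a = N).
  { transitivity (Rpower a (INR 3)). rewrite Rpower_pow by auto. simpl; ring.
    unfold a. rewrite Rpower_mult. replace (1/3 * INR 3) with 1 by (simpl; field). apply Rpower_1; auto. }
  assert (Ha1 : 1 <= a).
  { destruct (Rlt_le_dec a 1); auto. exfalso.
    assert (a * a <= 1) by nra. assert (a * a * a <= 1) by nra. lra. }
  assert (H43 : Rpower N (4/3) = N * a).
  { replace (4/3) with (1 + 1/3) by field. rewrite Rpower_plus, Rpower_1; auto. }
  assert (HT : forall g, g <> 0 -> INR (TT g P) <= 48 * N * a * k).
  { intros g Hg.
    destruct (TT_bounds g eps P n M M' K Hg He HND Hlen Hsep Hsq ltac:(lra) ltac:(lra)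
                 ltac:(unfold k in HM'a; unfold Rdiv; lra) HKc) as [B1 B2].
    apply le_INR in B1, B2. rewrite !mult_INR, !plus_INR, !mult_INR, !S_INR in B1.
    rewrite !plus_INR, !mult_INR, !S_INR in B2. fold N in B1, B2.
    pose proof (pos_INR K).
    assert (HKK : INR K * INR K <= (4 * s + 1) * (4 * s + 1)) by (apply Rmult_le_compat; lra).
    destruct (Rle_dec s a) as [Hsa|Hsa].
    - assert (X1 : (INR M' + 1) * N + N * (INR K * INR K) <= N * (24 * k)).
      { assert (INR M' + 1 + INR K * INR K <= 24 * k) by nra. nra. }
      assert (X2 : (INR M + 1) * ((INR M' + 1) * N + N * (INR K * INR K)) <= (2 * s) * (N * (24 * k))).
      { apply Rmult_le_compat; try lra. pose proof (pos_INR M'). nra. }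
      assert (X3 : 2 * s * (N * (24 * k)) <= 48 * N * a * k).
      { assert (0 <= N * k) by nra. nra. }
      lra.
    - assert (Haa : a * a <= k) by nra.
      assert (X1 : N * N <= N * a * k).
      { rewrite <- Ha3 at 2. assert (0 <= N * a) by nra.
        replace (N * (a * a * a)) with ((N * a) * (a * a)) by ring.
        apply Rmult_le_compat_l; auto. }
      assert (X2 : (INR M' + 1) * N <= 3 * N * a * k).
      { assert (INR M' + 1 <= 3 * k) by lra. assert (3 * k <= 3 * a * k) by nra. nra. }
      assert (0 <= N * a * k) by (apply Rmult_le_pos; nra).
      lra. }
  assert (Hln : 1 <= ln k).
  { rewrite <- (ln_exp 1). left. apply ln_increasing. apply exp_pos. pose proof exp_le_3. lra. }
  pose proof (Pi_le_TT alpha beta P) as HP. apply le_INR in HP. rewrite plus_INR in HP.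
  pose proof (HT alpha Halpha). pose proof (HT beta Hbeta).
  rewrite H43. fold k.
  assert (0 <= N * a * k) by (apply Rmult_le_pos; nra).
  assert (96 * (N * a) * k <= 96 * (N * a) * k * ln k).
  { rewrite <- (Rmult_1_r (96 * (N * a) * k)) at 1. apply Rmult_le_compat_l; nra. }
  lra.
Qed.
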